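(* Let $G$ be a graph of order $n$ and let $(x_1,\ldots,x_n)$ be a unit eigenvector of the adjacency matrix of $G$ for the eigenvalue $\mu(G)$. If $u$ is a vertex with $x_u=\min\{x_1,\ldots,x_n\}$, then \[ \mu(G-u)\geq\mu(G)\,\frac{1-2x_u^2}{1-x_u^2}. \]
   Context: All graphs are finite and simple; $\mu(G)$ denotes the largest eigenvalue of the adjacency matrix of $G$; $G-u$ is the graph obtained from $G$ by deleting the vertex $u$; the eigenvector is indexed by the vertices of $G$. *)

(* Defs.v *)
From HB Require Import structures.
From mathcomp Require Import all_boot all_order all_algebra.
From mathcomp Require Import reals.
Set Implicit Arguments. Unset Strict Implicit. Unset Printing Implicit Defensive.
Import Order.TTheory GRing.Theory Num.Theory.
Local Open Scope ring_scope.

Definition simple_graph (n : nat) (e : rel 'I_n) : Prop :=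
  (forall i j, e i j = e j i) /\ (forall i, ~~ e i i).

Definition adjmx (R : realType) (n : nat) (e : rel 'I_n) : 'M[R]_n :=
  \matrix_(i, j) (e i j)%:R.

(* G - u : delete vertex u from a graph on 'I_n.+1; the remaining vertices
   are relabelled by 'I_n through lift u. *)
Definition del_vertex (n : nat) (e : rel 'I_n.+1) (u : 'I_n.+1) : rel 'I_n :=
  fun i j => e (lift u i) (lift u j).

Definition largest_eigenvalue (R : realType) (n : nat) (A : 'M[R]_n) (m : R)
  : Prop :=
  eigenvalue A m /\ (forall a : R, eigenvalue A a -> a <= m).

(* Main.v *)
Require Import Defs.
From HB Require Import structures.
From mathcomp Require Import all_boot all_order all_algebra.
From mathcomp Require Import reals.
From mathcomp Require Import complex ring.
Import Order.TTheory GRing.Theory Num.Theory.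
Set Implicit Arguments. Unset Strict Implicit.
Local Open Scope ring_scope.
Local Open Scope sesquilinear_scope.
From mathcomp Require Import ring.

Section Key.
Variable R : realType.
Local Notation rc := (real_complex R).

Lemma rc_real (x : R) : rc x \is Num.real.
Proof. by apply/complex_realP; exists x. Qed.

Lemma conj_rcmx m n (A : 'M[R]_(m, n)) : map_mx Num.conj (map_mx rc A) = map_mx rc A.
Proof. by apply/matrixP => i j; rewrite !mxE conj_Creal // rc_real. Qed.

Lemma rayleigh m (B : 'M[R]_m) (mu : R) :
  B^T = B -> (forall a, eigenvalue B a -> a <= mu) ->
  forall y : 'rV[R]_m, (y *m B *m y^T) 0 0 <= mu * (y *m y^T) 0 0.
Proof.
move=> Bsym Hmu y.
pose Bc := map_mx rc B.
have Bh : Bc \is hermsymmx.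
  apply/is_hermitianmxP; rewrite expr0 scale1r.
  by rewrite /Bc -map_trmx conj_rcmx map_trmx Bsym.
pose P := spectralmx Bc; pose d := spectral_diag Bc.
have BcE : Bc = invmx P *m diag_mx d *m P.
  exact/orthomx_spectralP/hermitian_normalmx.
have PU : P \is unitarymx := spectral_unitarymx Bc.
have Pu : P \in unitmx := spectral_unit Bc.
have dreal : d \is a realmx := hermitian_spectral_diag_real Bh.
have PB : P *m Bc = diag_mx d *m P.
  by rewrite {1}BcE !mulmxA mulmxV // mul1mx.
have dle : forall i, d 0 i <= rc mu.
  move=> i; have rd := RRe_real (mxOverP dreal 0 i).
  rewrite -rd lecR; apply: Hmu.
  rewrite /eigenvalue /eigenspace -(map_mx_eq0 rc) map_kermx map_mxB map_scalar_mx /=.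
  rewrite rd -/Bc.
  apply/eigenvalueP; exists (row i P).
    by rewrite -row_mul PB row_mul row_diag_mx -scalemxAl -rowE.
  apply/negP => /eqP H0.
  have := congr1 (row i) (unitarymxP PU).
  rewrite row_mul H0 mul0mx row1 => /(congr1 (fun M : 'rV_m => M 0 i)).
  by rewrite !mxE !eqxx /= => /eqP; rewrite eq_sym oner_eq0.
pose yc := map_mx rc y.
have ycC : yc ^t* = yc^T by rewrite /yc -map_trmx conj_rcmx map_trmx.
pose z := yc *m P^t*.
have Pinv : invmx P = P^t* := invmx_unitary PU.
have Pz : P *m yc^t* = z^t*.
  by rewrite /z trmx_mul map_mxM trmxCK.
have qf : rc ((y *m B *m y^T) 0 0) = \sum_j d 0 j * (z 0 j * (z 0 j)^*).
  have -> : rc ((y *m B *m y^T) 0 0) = (map_mx rc (y *m B *m y^T)) 0 0 by rewrite [RHS]mxE.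
  rewrite !map_mxM -map_trmx -/yc -/Bc -ycC BcE Pinv !mulmxA -/z -[z *m _ *m P *m _]mulmxA Pz.
  rewrite mxE; apply: eq_bigr => j _.
  by rewrite mul_mx_diag !mxE mulrCA mulrA.
have nf : rc ((y *m y^T) 0 0) = \sum_j (z 0 j * (z 0 j)^*).
  have -> : rc ((y *m y^T) 0 0) = (map_mx rc (y *m y^T)) 0 0 by rewrite [RHS]mxE.
  rewrite !map_mxM -map_trmx -/yc -ycC.
  have -> : yc *m yc^t* = z *m z^t*.
    by rewrite -Pz /z !mulmxA -[yc *m _ *m P]mulmxA -Pinv mulVmx // mulmx1.
  by rewrite mxE; apply: eq_bigr => j _; rewrite !mxE.
rewrite -lecR rmorphM /= qf nf mulr_sumr; apply: ler_sum => j _.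
by apply: ler_wpM2r; [exact: mul_conjC_ge0 | exact: dle].
Qed.
End Key.


Lemma eig_pos (R : realType) k (M : 'M[R]_k) a : eigenvalue M a -> (0 < k)%N.
Proof. by case: k M => [|k] M //; rewrite /eigenvalue /eigenspace thinmx0 eqxx. Qed.

Lemma adj_sym (R : realType) k (e : rel 'I_k) : simple_graph e -> (adjmx R e)^T = adjmx R e.
Proof. by move=> [Hs _]; apply/matrixP => i j; rewrite !mxE Hs. Qed.

Lemma ej_form (R : realType) k (M : 'M[R]_k) j :
  ((delta_mx 0 j : 'rV[R]_k) *m M *m (delta_mx 0 j : 'rV[R]_k)^T) 0 0 = M j j.
Proof. by rewrite -rowE trmx_delta -colE !mxE. Qed.

Theorem lemma2 (R : realType) (n : nat) (e : rel 'I_n.+1)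
  (mu muu : R) (x : 'cV[R]_n.+1) (u : 'I_n.+1) :
  simple_graph e ->
  largest_eigenvalue (adjmx R e) mu ->
  largest_eigenvalue (adjmx R (del_vertex e u)) muu ->
  adjmx R e *m x = mu *: x ->
  \sum_(i < n.+1) x i 0 ^+ 2 = 1 ->
  (forall v : 'I_n.+1, x u 0 <= x v 0) ->
  mu * (1 - 2 * x u 0 ^+ 2) / (1 - x u 0 ^+ 2) <= muu.
Proof.
move=> Hg [_ Hmu] [Hmuu1 Hmuu] Hev Hnorm _.
have Hs := Hg.1; have Hirr := Hg.2.
have Hdel : simple_graph (del_vertex e u).
  by split => [i j|i]; rewrite /del_vertex; [exact: Hs | exact: Hirr].
have Ray := rayleigh (adj_sym R Hdel) Hmuu.
have Hx : forall v, \sum_w (e v w)%:R * x w 0 = mu * x v 0.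
  move=> v; have := congr1 (fun M : 'cV_n.+1 => M v 0) Hev; rewrite /= !mxE => <-.
  by apply: eq_bigr => w _; rewrite mxE.
pose y : 'rV[R]_n := \row_j x (lift u j) 0.
have Hn : (y *m y^T) 0 0 = 1 - x u 0 ^+ 2.
  rewrite -Hnorm (bigD1_ord u) //= addrC addrK mxE.
  by apply: eq_bigr => j _; rewrite !mxE.
have Hq : (y *m adjmx R (del_vertex e u) *m y^T) 0 0 = mu * (1 - 2 * x u 0 ^+ 2).
  have Q : (y *m adjmx R (del_vertex e u) *m y^T) 0 0 =
     \sum_j x (lift u j) 0 * \sum_k (e (lift u j) (lift u k))%:R * x (lift u k) 0.
    rewrite mxE; under eq_bigr => k _ do rewrite !mxE mulr_suml.
    rewrite exchange_big; apply: eq_bigr => j _; rewrite mulr_sumr.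
    by apply: eq_bigr => k _; rewrite !mxE -mulrA.
  have T : \sum_j x (lift u j) 0 * (e (lift u j) u)%:R = mu * x u 0.
    rewrite -(Hx u) (bigD1_ord u) //= (negbTE (Hirr u)) mul0r add0r.
    by apply: eq_bigr => j _; rewrite Hs mulrC.
  have F : mu = \sum_v x v 0 * \sum_w (e v w)%:R * x w 0.
    transitivity (mu * \sum_v x v 0 ^+ 2); first by rewrite Hnorm mulr1.
    rewrite mulr_sumr; apply: eq_bigr => v _.
    by rewrite Hx expr2 mulrCA.
  have F2 : mu = x u 0 * (mu * x u 0) + (\sum_j x (lift u j) 0 * (e (lift u j) u)%:R) * x u 0
       + \sum_j x (lift u j) 0 * \sum_k (e (lift u j) (lift u k))%:R * x (lift u k) 0.
    rewrite {1}F (bigD1_ord u) //= Hx -addrA; congr (_ + _).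
    rewrite mulr_suml -big_split /=; apply: eq_bigr => j _.
    by rewrite (bigD1_ord u) //= mulrDr !mulrA.
  rewrite Q; rewrite T in F2.
  apply: (addrI (x u 0 * (mu * x u 0) + mu * x u 0 * x u 0)); rewrite -F2; ring.
have Hs0 : 0 <= 1 - x u 0 ^+ 2 by rewrite -Hn mxE sumr_ge0 // => j _; rewrite !mxE -expr2 sqr_ge0.
have := Ray y; rewrite Hq Hn => H.
case: (eqVneq (1 - x u 0 ^+ 2) 0) => [H0|H0].
  rewrite H0 invr0 mulr0.
  have Hp := eig_pos Hmuu1.
  pose j := Ordinal Hp.
  have E : ((delta_mx 0 j : 'rV[R]_n) *m (delta_mx 0 j : 'rV[R]_n)^T) 0 0 = 1.
    by rewrite trmx_delta -colE !mxE !eqxx.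
  have := Ray (delta_mx 0 j); rewrite ej_form E mulr1 mxE.
  by rewrite /del_vertex (negbTE (Hirr _)).
have Hp : 0 < 1 - x u 0 ^+ 2 by rewrite lt_def H0 Hs0.
by rewrite ler_pdivrMr.
Qed.
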